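(* Let $f:\mathbb{R}^n\to\mathbb{R}^n$ be Borel measurable, $\mathbf{X}\subset\mathbb{R}^n$ compact, $\alpha\in(0,1)$, $\lambda$ a Borel probability measure on $\mathbf{X}$ with support $\mathbf{X}$, $\boldsymbol\beta=(\beta_1,\dots,\beta_N)^\top$ a vector of Lipschitz continuous functions on $\mathbb{R}^n$, $\{(x_i,x_i^+)\}_{i=1}^K$ data with $x_i\in\mathbf{X}$ and $x_i^+=f(x_i)$, and $\{z_i\}_{i=1}^{K'}\subset\mathbf{X}$ further points. Let $\mathbf{c}_{N,K}$ be an optimal solution of the linear program \[ \sup_{\mathbf{c}\in\mathbb{R}^N}\ \mathbf{z}^\top\mathbf{c}\quad\text{s.t.}\quad \boldsymbol\beta(x_i)^\top\mathbf{c}\le \mathrm{dist}_{\mathbf{X}}(x_i^+)+\alpha\,\boldsymbol\beta(\mathrm{proj}_{\mathbf{X}}(x_i^+))^\top\mathbf{c}\ \ (i=1,\dots,K),\qquad -1\le\boldsymbol\beta(z_i)^\top\mathbf{c}\le(1-\alpha)^{-1}\ \ (i=1,\dots,K'), \] where $\mathbf{z}=\int_{\mathbf{X}}\boldsymbol\beta(x)\,d\lambda(x)$, and let $v_{N,K}(x)=\boldsymbol\beta(x)^\top\mathbf{c}_{N,K}$. Define $E:\mathbf{X}\to\mathbb{R}$ by $E(x)=v_{N,K}(x)-\mathrm{dist}_{\mathbf{X}}(f(x))-\alpha\,v_{N,K}(\mathrm{proj}_{\mathbf{X}}(f(x)))$. Then \[ \big\{x\in\mathbf{X}: v_{N,K}(x)\le(1-\alpha)^{-1}\sup_{z\in\mathbf{X}}E(z)\big\}\supset\mathbf{X}_\infty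 . \]
   Context: The maximum positively invariant set is $\mathbf{X}_\infty=\{x\in\mathbf{X}: f^{(k)}(x)\in\mathbf{X}\text{ for all } k\in\mathbb{N}_0\}$, where $f^{(k)}$ is the $k$-fold composition of $f$. $\mathrm{proj}_{\mathbf{X}}(x)\in\operatorname{arg\,min}_{y\in\mathbf{X}}\|x-y\|_2$ is the Euclidean projection onto $\mathbf{X}$ (a fixed measurable selection when non-unique), and $\mathrm{dist}_{\mathbf{X}}(x)=\min\{\min_{y\in\mathbf{X}}\|x-y\|_2,1\}$. *)

(* Defs.v *)
From HB Require Import structures.
From mathcomp Require Import all_boot all_order all_algebra.
From mathcomp Require Import all_classical all_reals all_analysis.
Set Implicit Arguments. Unset Strict Implicit. Unset Printing Implicit Defensive.
Import Order.TTheory GRing.Theory Num.Theory.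
Import numFieldNormedType.Exports.
Local Open Scope classical_set_scope.
Local Open Scope ring_scope.

Definition BorelRn (R : realType) (n : nat) :=
  g_sigma_algebraType (@open 'rV[R]_n).

(* Euclidean norm ||x||_2 on R^n (the library's norm on 'rV is the max norm). *)
Definition enorm (R : realType) (n : nat) (x : 'rV[R]_n) : R :=
  Num.sqrt (\sum_(i < n) x ord0 i ^+ 2).

Definition distX (R : realType) (n : nat) (X : set 'rV[R]_n) (x : 'rV[R]_n) : R :=
  Num.min (inf [set enorm (x - y) | y in X]) 1.

Definition is_projX (R : realType) (n : nat) (X : set 'rV[R]_n)
  (p : 'rV[R]_n -> 'rV[R]_n) : Prop :=
  forall x, X (p x) /\ (forall y, X y -> enorm (x - p x) <= enorm (x - y)).

Definition lipschitz_eucl (R : realType) (n : nat) (g : 'rV[R]_n -> R) : Prop :=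
  exists L : R, forall x y, `|g x - g y| <= L * enorm (x - y).

Definition msupport (R : realType) (n : nat)
  (mu : {measure set (BorelRn R n) -> \bar R}) : set 'rV[R]_n :=
  [set x | forall U : set 'rV[R]_n, open U -> U x -> (0 < mu U)%E].

Definition Xinf (R : realType) (n : nat) (f : 'rV[R]_n -> 'rV[R]_n)
  (X : set 'rV[R]_n) : set 'rV[R]_n :=
  [set x | X x /\ forall k : nat, X (iter k f x)].

Definition bdot (R : realType) (n N : nat) (beta : 'I_N -> 'rV[R]_n -> R)
  (c : 'I_N -> R) (x : 'rV[R]_n) : R := \sum_(j < N) beta j x * c j.

Definition lp_feasible (R : realType) (n N K K' : nat) (f : 'rV[R]_n -> 'rV[R]_n)
  (X : set 'rV[R]_n) (proj : 'rV[R]_n -> 'rV[R]_n) (alpha : R)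
  (beta : 'I_N -> 'rV[R]_n -> R) (xs : 'I_K -> 'rV[R]_n) (zs : 'I_K' -> 'rV[R]_n)
  (c : 'I_N -> R) : Prop :=
  (forall i, bdot beta c (xs i) <= distX X (f (xs i)) + alpha * bdot beta c (proj (f (xs i))))
  /\ (forall i, -1 <= bdot beta c (zs i) /\ bdot beta c (zs i) <= (1 - alpha)^-1).

(* Main.v *)
Require Import Defs.
From HB Require Import structures.
From mathcomp Require Import all_boot all_order all_algebra.
From mathcomp Require Import all_classical all_reals all_analysis.
From mathcomp Require Import ring lra.
Import Order.TTheory GRing.Theory Num.Theory.
Import numFieldNormedType.Exports.
Local Open Scope classical_set_scope.
Local Open Scope ring_scope.

Lemma entry_le (R : realType) n (x : 'rV[R]_n) i : `|x ord0 i| <= `|x|.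
Proof.
change (`|x ord0 i| <= mx_norm x); rewrite mx_normrE.
exact: (le_bigmax 0 (fun ij : 'I_1 * 'I_n => `|x ij.1 ij.2|) (ord0, i)).
Qed.

Lemma enorm_le (R : realType) n (x : 'rV[R]_n) : enorm x <= Num.sqrt n%:R * `|x|.
Proof.
rewrite /enorm -(@ger0_norm _ `|x|) // -sqrtr_sqr -sqrtrM ?ler0n //.
rewrite ler_wsqrtr //.
apply: (@le_trans _ _ (\sum_(i < n) `|x| ^+ 2)).
  apply: ler_sum =>  i _; rewrite -real_normK ?num_real //; rewrite lerXn2r ?nnegrE //.
  exact: entry_le.
by rewrite sumr_const card_ord mulr_natl.
Qed.

Lemma enorm_eq0 (R : realType) n (x : 'rV[R]_n) : enorm x <= 0 -> x = 0.
Proof.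
rewrite /enorm => h.
have h0 : \sum_(i < n) x ord0 i ^+ 2 = 0.
  apply/eqP; rewrite eq_le sumr_ge0 ?andbT => [|i _]; last exact: sqr_ge0.
  by rewrite -sqrtr_eq0 eq_le h sqrtr_ge0.
apply/rowP => i; rewrite mxE.
have := (@psumr_eq0P _ _ _ _ (fun j _ => sqr_ge0 (x ord0 j)) h0 i isT).
by move/eqP; rewrite sqrf_eq0 => /eqP.
Qed.

Lemma enorm0 (R : realType) n : enorm (0 : 'rV[R]_n) = 0.
Proof. by rewrite /enorm big1 ?sqrtr0 // => i _; rewrite mxE expr0n. Qed.

Lemma enorm_ge0 (R : realType) n (x : 'rV[R]_n) : 0 <= enorm x.
Proof. exact: sqrtr_ge0. Qed.
Lemma geo_le (R : realType) (a B d : R) : 0 < a -> a < 1 ->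
  (forall k, d <= a ^+ k * B) -> d <= 0.
Proof.
move=> a0 a1 h.
have ha : `|a| < 1 by rewrite ger0_norm // ltW.
have hc : (fun k => a ^+ k * B) @ \oo --> 0 * B by apply: cvgMl; exact: cvg_expr ha.
rewrite mul0r in hc.
rewrite -(cvg_lim _ hc) //; apply: limr_ge; first by apply/cvg_ex; exists 0.
exact: nearW.
Qed.

Theorem lemma4 (R : realType) (n N K K' : nat)
  (f : 'rV[R]_n -> 'rV[R]_n)
  (hf : measurable_fun setT (f : BorelRn R n -> BorelRn R n))
  (X : set 'rV[R]_n) (hX : compact X)
  (alpha : R) (ha0 : 0 < alpha) (ha1 : alpha < 1)
  (lam : probability (BorelRn R n) R) (hsupp : msupport lam = X)
  (beta : 'I_N -> 'rV[R]_n -> R) (hbeta : forall j, lipschitz_eucl (beta j))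
  (proj : 'rV[R]_n -> 'rV[R]_n) (hproj : is_projX X proj)
  (hprojm : measurable_fun setT (proj : BorelRn R n -> BorelRn R n))
  (xs : 'I_K -> 'rV[R]_n) (hxs : forall i, X (xs i))
  (zs : 'I_K' -> 'rV[R]_n) (hzs : forall i, X (zs i))
  (c : 'I_N -> R)
  (hc_feas : lp_feasible f X proj alpha beta xs zs c)
  (hc_opt : forall c' : 'I_N -> R, lp_feasible f X proj alpha beta xs zs c' ->
     \sum_(j < N) Rintegral lam X (beta j) * c' j
       <= \sum_(j < N) Rintegral lam X (beta j) * c j) :
  let v := bdot beta c in
  let E := fun x => v x - distX X (f x) - alpha * v (proj (f x)) in
  Xinf f X `<=` [set x | X x /\ v x <= (1 - alpha)^-1 * sup [set E z | z in X]].
Proof.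
move=> v E x [Xx Hk]; split => //.
have projid : forall y, X y -> proj y = y.
  move=> y Xy; have [_ h] := hproj y.
  have := h y Xy; rewrite subrr enorm0 => /enorm_eq0 /eqP.
  by rewrite subr_eq0 => /eqP <-.
have dist0 : forall y, X y -> distX X y = 0.
  move=> y Xy; rewrite /distX.
  have hi : inf [set enorm (y - z) | z in X] = 0.
    apply/eqP; rewrite eq_le; apply/andP; split.
      have := @ge_inf _ [set enorm (y - z) | z in X].
      move=> /(_ _ 0 _) -> //.
        by exists 0 => _ [z _ <-]; exact: enorm_ge0.
      by exists y => //; rewrite subrr enorm0.
    apply: lb_le_inf; first by exists (enorm (y - y)), y.
    by move=> _ [z _ <-]; exact: enorm_ge0.
  by rewrite hi; apply/min_idPl; rewrite ler01.
have distge0 : forall y, 0 <= distX X y.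
  move=> y; rewrite /distX le_min ler01 andbT.
  apply: lb_le_inf; first by exists (enorm (y - x)), x.
  by move=> _ [z _ <-]; exact: enorm_ge0.
have [P HP] : exists P : R, forall y, X y -> `|y| <= P.
  have [M0 [_ HM0]] := compact_bounded hX.
  exists (`|M0| + 1) => y Xy; apply: (HM0 (`|M0| + 1)) => //.
  by apply: le_lt_trans (ler_norm M0) _; rewrite ltrDl.
have [L hL] := choice hbeta.
pose Bj j := `|beta j x| + `|L j| * (Num.sqrt n%:R * (P + P)).
have hB : forall j y, X y -> `|beta j y| <= Bj j.
  move=> j y Xy.
  have h1 := ler_normD (beta j x) (beta j y - beta j x).
  rewrite addrC subrK in h1; apply: le_trans h1 _; rewrite lerD2l.
  apply: le_trans (hL j y x) _.
  apply: le_trans (ler_norm _) _; rewrite normrM ler_wpM2l //.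
  rewrite ger0_norm ?enorm_ge0 //.
  apply: le_trans; first exact: enorm_le.
  rewrite ler_wpM2l ?sqrtr_ge0 //.
  by apply: le_trans (ler_normB _ _) _; rewrite lerD ?HP.
pose M := \sum_(j < N) Bj j * `|c j|.
have hM : forall y, X y -> `|v y| <= M.
  move=> y Xy; rewrite /v /bdot; apply: le_trans; first exact: ler_norm_sum.
  apply: ler_sum => j _; rewrite normrM ler_wpM2r //; exact: hB.
have hsup : has_sup [set E z | z in X].
  split; first by exists (E x), x.
  exists (M + alpha * M) => _ [z Xz <-]; rewrite /E.
  have h1 := hM z Xz.
  have [Xp _] := hproj (f z).
  have h2 := hM _ Xp.
  have h3 := distge0 (f z).
  move: h1 h2; rewrite !ler_norml => /andP[_ h1] /andP[h2 _].
  nra.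
set S := sup _.
pose t := (1 - alpha)^-1.
have ht : t * (1 - alpha) = 1 by rewrite mulVf // subr_eq0 gt_eqF.
pose xk k := iter k f x.
have Xk : forall k, X (xk k) by move=> k; exact: Hk.
have step : forall k, v (xk k) - t * S <= alpha * (v (xk k.+1) - t * S).
  move=> k.
  have hE : E (xk k) <= S by apply: sup_upper_bound => //; exists (xk k).
  have eq1 : f (xk k) = xk k.+1 by [].
  rewrite /E eq1 dist0 // projid // subr0 in hE.
  have e2 : alpha * t * S = t * S - S.
    have : t - alpha * t = 1 by rewrite -ht; ring.
    move=> e; rewrite -[X in _ = _ - X]mul1r -e; ring.
  nra.
have geo : forall k, v x - t * S <= alpha ^+ k * (v (xk k) - t * S).
  elim=> [|k IH]; first by rewrite expr0 mul1r.
  apply: le_trans IH _; rewrite exprSr -[alpha ^+ k * alpha * _]mulrA ler_wpM2l ?exprn_ge0 ?(ltW ha0) //.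
have : v x - t * S <= 0.
  apply: (@geo_le _ alpha (M + `|t * S|)) => // k.
  apply: le_trans (geo k) _; rewrite ler_wpM2l ?exprn_ge0 ?(ltW ha0) //.
  apply: lerD; first by apply: le_trans (ler_norm _) (hM _ (Xk k)).
  by rewrite -normrN ler_norm.
by rewrite subr_le0.
Qed.
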